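(* Let $u$ be a positive integer, $\mathcal F$ and $\mathcal C$ finite sets, and let $x_{i,j}\ge0$ ($i\in\mathcal F,j\in\mathcal C$) and $y_i\ge0$ ($i\in\mathcal F$) satisfy $\sum_{i\in\mathcal F}x_{i,j}=1$ for every $j\in\mathcal C$. Let $\mathcal B\subseteq\mathcal F$ and suppose that $x_{\mathcal B,\mathcal J}\le f(|\mathcal J|,y_{\mathcal B})$ for every $\mathcal J\subseteq\mathcal C$. Let $y'_{\mathcal B}=\frac1u\sum_{j\in\mathcal C}x_{\mathcal B,j}$ and suppose $y'_{\mathcal B}\ge\lfloor y_{\mathcal B}\rfloor$. Then $$\sum_{j\in\mathcal C}x_{\mathcal B,j}(1-x_{\mathcal B,j})\ \ge\ u\,\big(y'_{\mathcal B}-\lfloor y'_{\mathcal B}\rfloor\big)\big(\lceil y_{\mathcal B}\rceil-y_{\mathcal B}\big).$$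
   Context: Notation: $y_{\mathcal B}=\sum_{i\in\mathcal B}y_i$, $x_{\mathcal B,j}=\sum_{i\in\mathcal B}x_{i,j}$, $x_{\mathcal B,\mathcal J}=\sum_{i\in\mathcal B,j\in\mathcal J}x_{i,j}$. The function $f:\mathbb Z_{\ge0}\times\mathbb R_{\ge0}\to\mathbb R$ is defined by $f(p,q)=qu$ if $q\le\lfloor p/u\rfloor$; $f(p,q)=u\lfloor p/u\rfloor+u(p/u-\lfloor p/u\rfloor)(q-\lfloor p/u\rfloor)$ if $\lfloor p/u\rfloor<q<\lceil p/u\rceil$; $f(p,q)=p$ if $q\ge\lceil p/u\rceil$. *)

(* Defs.v *)
From mathcomp Require Import all_boot all_order all_algebra.
From mathcomp Require Import reals.
Set Implicit Arguments. Unset Strict Implicit. Unset Printing Implicit Defensive.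
Import Order.TTheory GRing.Theory Num.Theory.
Local Open Scope ring_scope.

(* The function f(p,q) of the paper, with the integer parameter u explicit. *)
Definition fcap (R : realType) (u p : nat) (q : R) : R :=
  let r : R := p%:R / u%:R in
  let fl : R := (Num.floor r)%:~R in
  let ce : R := (Num.ceil r)%:~R in
  if q <= fl then q * u%:R
  else if q < ce then u%:R * fl + u%:R * (r - fl) * (q - fl)
  else p%:R.

(* Main.v *)
Require Import Defs.
From mathcomp Require Import all_boot all_order all_algebra.
From mathcomp Require Import reals ring lra.
Import Order.TTheory GRing.Theory Num.Theory.
Local Open Scope ring_scope.

Lemma key (R : realType) (u t : nat) (hu : (0 < u)%N) (Y y' : R) :
  Num.ceil Y = Num.floor Y + 1 -> (Num.floor Y)%:~R <= y' ->
  u%:R * (y' - (Num.floor y')%:~R) * (1 - (Y - (Num.floor Y)%:~R))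
  <= (Y - (Num.floor Y)%:~R) * t%:R + (1 - (Y - (Num.floor Y)%:~R)) * (u%:R * y')
     - fcap u t Y.
Proof.
move=> hce hky.
have hkm : Num.floor Y <= Num.floor y' by rewrite floor_ge_int.
have hkmR : (Num.floor Y)%:~R <= (Num.floor y')%:~R :> R by rewrite ler_int.
have [hm1 hm2] := andP (floor_itv y').
have [hk1 hk2] := andP (floor_itv Y).
rewrite intrD in hm2 hk2.
set k := (Num.floor Y)%:~R in hkmR hk1 hk2 *.
set m := (Num.floor y')%:~R in hkmR hm1 hm2 *.
have hu0 : (0 : R) < u%:R by rewrite ltr0n.
set r : R := t%:R / u%:R.
have htr : (t%:R : R) = r * u%:R by rewrite /r mulfVK // gt_eqF.
have [hr1 hr2] := andP (floor_itv r).
have [hc1 hc2] := andP (ceil_itv r).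
rewrite intrD in hr2; rewrite intrB in hc1.
rewrite /fcap -/r htr.
set fl := Num.floor r in hr1 hr2 *.
set ce := Num.ceil r in hc1 hc2 *.
have hu1 : (1 : R) <= u%:R by rewrite ler1n.
case: ifP => hA.
  have : Num.ceil Y <= fl by rewrite ceil_le_int.
  rewrite hce -lerBrDr -(ler_int R) intrB /= -/k => hfl.
  have h1 : 0 <= (Y - k) * (r - (k + 1)) by apply: mulr_ge0; lra.
  have h2 : 0 <= (1 - (Y - k)) * (m - k) by apply: mulr_ge0; lra.
  have h3 : 0 <= u%:R * ((Y - k) * (r - (k + 1)) + (1 - (Y - k)) * (m - k)).
    by apply: mulr_ge0; lra.
  nra.
case: ifP => hB.
  have e1 : fl <= Num.floor Y by rewrite floor_ge_int; move: hA => /negbT; rewrite -ltNge => /ltW.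
  have e2 : ce <= fl + 1 by rewrite ceil_le_int intrD ltW.
  have e3 : Num.floor Y < fl + 1.
    by rewrite floor_lt_int; apply: (lt_le_trans hB); rewrite ler_int.
  have efl : fl = Num.floor Y.
    apply/eqP; rewrite eq_le e1 /=. move: e3. rewrite ltzD1. done.
  rewrite efl -/k.
  have h2 : 0 <= (1 - (Y - k)) * (m - k) by apply: mulr_ge0; lra.
  have h3 : 0 <= u%:R * ((1 - (Y - k)) * (m - k)) by apply: mulr_ge0; lra.
  nra.
have e1 : ce <= Num.floor Y by rewrite floor_ge_int; move: hB => /negbT; rewrite -leNgt.
have hrk : r <= k by apply: (le_trans hc2); rewrite /k ler_int.
have h2 : 0 <= (1 - (Y - k)) * (m - k) by apply: mulr_ge0; lra.
have h3 : 0 <= u%:R * ((1 - (Y - k)) * (m - k)) by apply: mulr_ge0; lra.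
have h4 : 0 <= u%:R * ((1 - (Y - k)) * (k - r)) by apply: mulr_ge0=>//; apply: mulr_ge0; lra.
nra.
Qed.

Theorem lemma3 (R : realType) (u : nat) (hu : (0 < u)%N)
  (F C : finType) (x : F -> C -> R) (y : F -> R)
  (hx : forall i j, 0 <= x i j) (hy : forall i, 0 <= y i)
  (hxsum : forall j, \sum_(i : F) x i j = 1)
  (B : {set F})
  (hB : forall J : {set C},
      \sum_(i in B) \sum_(j in J) x i j <= fcap u #|J| (\sum_(i in B) y i))
  (hy' : (Num.floor (\sum_(i in B) y i))%:~R
         <= (u%:R)^-1 * \sum_(j : C) \sum_(i in B) x i j) :
  let yB := \sum_(i in B) y i in
  let y'B := (u%:R)^-1 * \sum_(j : C) \sum_(i in B) x i j in
  \sum_(j : C) (\sum_(i in B) x i j) * (1 - \sum_(i in B) x i j)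
    >= u%:R * (y'B - (Num.floor y'B)%:~R) * ((Num.ceil yB)%:~R - yB).
Proof.
cbv zeta.
set yB := \sum_(i in B) y i.
set y'B := (u%:R)^-1 * \sum_(j : C) \sum_(i in B) x i j.
set a := fun j => \sum_(i in B) x i j.
have ha0 : forall j, 0 <= a j by move=> j; apply: sumr_ge0 => i _.
have ha1 : forall j, a j <= 1.
  move=> j; rewrite -(hxsum j) [X in _ <= X](bigID (fun i => i \in B)) /=.
  by rewrite lerDl; apply: sumr_ge0 => i _.
have hu0 : (0 : R) < u%:R by rewrite ltr0n.
set S := \sum_(j : C) a j.
have hS : S = u%:R * y'B by rewrite /y'B mulrA mulfV ?mul1r // gt_eqF.
case: (boolP (yB \is a Num.int)) => hint.
  rewrite ceilK // subrr mulr0; apply: sumr_ge0 => j _.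
  by apply: mulr_ge0; [apply: ha0 | rewrite subr_ge0; apply: ha1].
have hce : Num.ceil yB = Num.floor yB + 1 by rewrite ceil_floor hint.
rewrite hce intrD.
set k := (Num.floor yB)%:~R.
set e := yB - k.
have [hk1 hk2] := andP (floor_itv yB).
rewrite intrD -/k in hk2; rewrite -/k in hk1.
have he0 : 0 <= e by rewrite /e subr_ge0.
have he1 : e <= 1 by rewrite /e; lra.
set J := [set j | e <= a j].
have hJ := hB J.
rewrite exchange_big /= -/yB in hJ.
have hK := @key R u #|J| hu _ _ hce hy'.
rewrite -/k -/e -/y'B -hS in hK.
have hsplit : S = \sum_(j in J) a j + \sum_(j | j \notin J) a j.
  by rewrite /S (bigID (fun j => j \in J)).
have hlow : \sum_(j in J) e * (1 - a j) + \sum_(j | j \notin J) (1 - e) * a j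
    <= \sum_(j : C) a j * (1 - a j).
  rewrite [X in _ <= X](bigID (fun j => j \in J)) /=.
  apply: lerD; apply: ler_sum => j hj.
    by rewrite inE in hj; apply: ler_wpM2r; rewrite ?subr_ge0.
  rewrite !inE in hj; rewrite mulrC; apply: ler_wpM2l => //.
  by rewrite lerB // ltW // ltNge.
have hcomp : \sum_(j in J) e * (1 - a j) + \sum_(j | j \notin J) (1 - e) * a j
   = e * #|J|%:R + (1 - e) * S - \sum_(j in J) a j.
  rewrite hsplit -!mulr_sumr sumrB sumr_const.
  rewrite -[in RHS](mulr_natr 1) mul1r; ring.
have : u%:R * (y'B - (Num.floor y'B)%:~R) * (1 - e) <= \sum_(j : C) a j * (1 - a j).
  apply: (le_trans hK); apply: le_trans hlow; rewrite hcomp; lra.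
suff -> : k + 1 - yB = 1 - e by [].
rewrite /e; ring.
Qed.
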